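(* Let $\mathcal O\subseteq\mathrm{dS}^d$ be open and let $C=\{y\in\mathbb R^{1+d}:\beta(x,y)>-1\text{ for all }x\in\mathcal O\}$ (a convex subset of $\mathbb R^{1+d}$). Then $\mathcal O'=C^\circ\cap\mathrm{dS}^d$, where $C^\circ$ is the interior of $C$ in $\mathbb R^{1+d}$.
   Context: Let $d\ge1$, $\beta(x,y)=x_0y_0-x_1y_1-\dots-x_dy_d$ on $\mathbb R^{1+d}$, $\mathrm{dS}^d=\{x:\beta(x,x)=-1\}$. For open $\mathcal O\subseteq\mathrm{dS}^d$, its (open) spacelike complement is $\mathcal O'=$ the interior, relative to $\mathrm{dS}^d$, of $\{y\in\mathrm{dS}^d:\beta(x,y)>-1\ \text{for all } x\in\mathcal O\}$. *)

(* Defs.v *)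
(* Points of R^{1+d} are row vectors 'rV[R]_(d.+1),
   with the product (matrix) topology; coordinate 0 is the time coordinate. *)
From HB Require Import structures.
From mathcomp Require Import all_boot all_order all_algebra.
From mathcomp Require Import all_classical all_reals all_analysis.
Set Implicit Arguments. Unset Strict Implicit. Unset Printing Implicit Defensive.
Import Order.TTheory GRing.Theory Num.Theory.
Import numFieldNormedType.Exports.
Local Open Scope ring_scope.
Local Open Scope classical_set_scope.

Definition beta (R : realType) (d : nat) (x y : 'rV[R]_(d.+1)) : R :=
  x ord0 ord0 * y ord0 ord0
  - \sum_(i < d) x ord0 (lift ord0 i) * y ord0 (lift ord0 i).

Definition dS (R : realType) (d : nat) : set 'rV[R]_(d.+1) :=
  [set x | beta x x = -1].

Definition rel_open (T : topologicalType) (S A : set T) : Prop :=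
  exists U : set T, open U /\ A = U `&` S.

Definition rel_interior (T : topologicalType) (S A : set T) : set T :=
  [set y | S y /\ exists U : set T, [/\ open U, U y & U `&` S `<=` A]].

Definition Cset (R : realType) (d : nat) (O : set 'rV[R]_(d.+1)) : set 'rV[R]_(d.+1) :=
  [set y | forall x, O x -> -1 < beta x y].

(* spacelike complement O' : interior relative to dS^d of {y in dS^d : ...} *)
Definition spacelike_compl (R : realType) (d : nat) (O : set 'rV[R]_(d.+1))
  : set 'rV[R]_(d.+1) :=
  rel_interior (@dS R d) [set y | @dS R d y /\ forall x, O x -> -1 < beta x y].

(* Main.v *)
Require Import Defs.
From HB Require Import structures.
From mathcomp Require Import all_boot all_order all_algebra.
From mathcomp Require Import all_classical all_reals all_analysis.
From mathcomp Require Import ring lra.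
Import Order.TTheory GRing.Theory Num.Theory.
Import numFieldNormedType.Exports.
Local Open Scope ring_scope.
Local Open Scope classical_set_scope.

Section S.
Variables (R : realType) (d : nat).
Local Notation V := 'rV[R]_(d.+1).

Lemma betaC (x y : V) : beta x y = beta y x.
Proof. by rewrite /beta mulrC; congr (_ - _); apply: eq_bigr => i _; rewrite mulrC. Qed.

Lemma betaDr (x y z : V) : beta x (y + z) = beta x y + beta x z.
Proof.
rewrite /beta !mxE mulrDr.
rewrite (eq_bigr (fun i => x ord0 (lift ord0 i) * y ord0 (lift ord0 i) +
   x ord0 (lift ord0 i) * z ord0 (lift ord0 i))); last by move=> i _; rewrite !mxE mulrDr.
rewrite big_split /=; ring.
Qed.

Lemma betaZr (x y : V) (a : R) : beta x (a *: y) = a * beta x y.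
Proof.
rewrite /beta !mxE mulrBr mulr_sumr; congr (_ - _); first ring.
by apply: eq_bigr => i _; rewrite !mxE; ring.
Qed.

Lemma betaNr (x y : V) : beta x (- y) = - beta x y.
Proof. by rewrite -scaleN1r betaZr mulN1r. Qed.

Lemma betaBr (x y z : V) : beta x (y - z) = beta x y - beta x z.
Proof. by rewrite betaDr betaNr. Qed.

Lemma beta_cont (y : V) : (fun z : V => beta z z) @ y --> beta y y.
Proof.
have c := @coord_continuous R 1 d.+1.
have h1 := cvgM (c ord0 ord0 y) (c ord0 ord0 y).
have h2 : \sum_(i < d) (fun z : V => z ord0 (lift ord0 i) * z ord0 (lift ord0 i)) x @[x --> y] --> \sum_(i < d) (y ord0 (lift ord0 i) * y ord0 (lift ord0 i)).
  apply: cvg_big.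
  - exact: add_continuous.
  - exact: nbhs_filter.
  move=> i _. have h := cvgM (c ord0 (lift ord0 i) y) (c ord0 (lift ord0 i) y). exact: (h (nbhs_filter y)).
have h3 := cvgB (h1 (nbhs_filter y)) h2.
exact: h3.
Qed.

Definition e0 : V := \row_(j < d.+1) (j == ord0)%:R.
Definition qf (z : V) := beta z z.
Definition cf (z : V) := - z ord0 ord0 * (qf z)^-1.
Definition vf (z : V) := e0 + cf z *: z.
Definition mf (z : V) := Num.sqrt ((-1 - qf z) * (1 - z ord0 ord0 * z ord0 ord0 * (qf z)^-1)^-1).
Definition ppf (z : V) := z + mf z *: vf z.
Definition pmf (z : V) := z - mf z *: vf z.
Definition sf (z : V) := Num.sqrt (- qf z).
Definition wf (z : V) := (sf z)^-1 *: z.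

Lemma beta_e0r (x : V) : beta x e0 = x ord0 ord0.
Proof.
rewrite /beta /e0 !mxE eqxx mulr1 big1 ?subr0 // => i _.
by rewrite mxE eq_sym (negbTE (neq_lift ord0 i)) mulr0.
Qed.

Lemma beta_e0l (x : V) : beta e0 x = x ord0 ord0.
Proof. by rewrite betaC beta_e0r. Qed.

Lemma betaZl (x y : V) (a : R) : beta (a *: x) y = a * beta x y.
Proof. by rewrite betaC betaZr betaC. Qed.

Lemma betaDl (x y z : V) : beta (x + y) z = beta x z + beta y z.
Proof. by rewrite betaC betaDr !(betaC z). Qed.

Lemma L1 (z : V) : qf z < 0 -> beta z (vf z) = 0.
Proof.
move=> hq; rewrite /vf betaDr betaZr beta_e0r /cf -/(qf z).
have : qf z != 0 by rewrite lt_eqF.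
move=> h; by field.
Qed.

Lemma L2 (z : V) : qf z < 0 -> beta (vf z) (vf z) = 1 - z ord0 ord0 * z ord0 ord0 * (qf z)^-1.
Proof.
move=> hq; rewrite {1}/vf betaDl betaZl L1 // mulr0 addr0.
rewrite /vf betaDr betaZr !beta_e0l /e0 mxE eqxx /cf.
have : qf z != 0 by rewrite lt_eqF.
move=> h.
rewrite (_ : true%:R = 1 :> R) //; by field.
Qed.

Lemma L3 (z : V) : qf z <= -1 -> dS (ppf z) /\ dS (pmf z).
Proof.
move=> hq.
have hq0 : qf z < 0 by apply: (le_lt_trans hq); rewrite oppr_lt0 ltr01 //.
have hd : 0 < 1 - z ord0 ord0 * z ord0 ord0 * (qf z)^-1.
  have : z ord0 ord0 * z ord0 ord0 * (qf z)^-1 <= 0.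
    have hi : (qf z)^-1 < 0 by rewrite invr_lt0.
    nra.
  move=> h; lra.
have hm : mf z ^+ 2 = (-1 - qf z) * (1 - z ord0 ord0 * z ord0 ord0 * (qf z)^-1)^-1.
  rewrite /mf sqr_sqrtr // mulr_ge0 //; [lra | by rewrite invr_ge0 ltW].
have key : forall m : R, m ^+ 2 = (-1 - qf z) * (1 - z ord0 ord0 * z ord0 ord0 * (qf z)^-1)^-1 ->
   beta (z + m *: vf z) (z + m *: vf z) = -1.
  move=> m hm'; rewrite betaDl !betaDr !betaZl !betaZr (betaC (vf z) z) L1 // L2 //.
  rewrite -/(qf z) mulr0 !addr0 mulrA -expr2 hm' mulfVK ?gt_eqF //; lra.
split; rewrite /dS /=.
  exact: key.
rewrite /pmf -scaleNr; apply: key; by rewrite sqrrN.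
Qed.

Lemma L4 (x z : V) : beta x z = (beta x (ppf z) + beta x (pmf z)) / 2.
Proof. rewrite /ppf /pmf betaDr betaBr betaZr; by field.
Qed.

Lemma L5 (z : V) : qf z < 0 -> dS (wf z) /\ beta z z = - (sf z)^+2 /\ 0 < sf z.
Proof.
move=> hq; have hs : sf z ^+ 2 = - qf z by rewrite /sf sqr_sqrtr // oppr_ge0 ltW.
have hs0 : 0 < sf z by rewrite /sf sqrtr_gt0 oppr_gt0.
split; last by split => //; rewrite hs opprK.
rewrite /dS /= /wf betaZl betaZr -/(qf z) mulrA -expr2 exprVn.
rewrite hs; have : qf z != 0 by rewrite lt_eqF.
move=> h; by field.
Qed.

Lemma L6 (x z : V) : qf z < 0 -> beta x z = sf z * beta x (wf z).
Proof.
move=> hq; have [_ [_ hs0]] := L5 z hq.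
by rewrite /wf betaZr mulrA mulfV ?gt_eqF // mul1r.
Qed.

Lemma conts (y : V) : beta y y = -1 ->
  [/\ qf z @[z --> y] --> (-1 : R), ppf z @[z --> y] --> y,
      pmf z @[z --> y] --> y & wf z @[z --> y] --> y].
Proof.
move=> hy.
have Fy := nbhs_filter y.
have hq : qf z @[z --> y] --> (-1 : R) by rewrite -hy; exact: beta_cont.
have c := @coord_continuous R 1 d.+1.
have h0 := c ord0 ord0 y.
have n1 : (-1 : R) != 0 by rewrite oppr_eq0 oner_eq0.
have hqi := cvgV (FF:=Fy) n1 hq.
have hc := cvgM (FF:=Fy) (cvgN (FF:=Fy) h0) hqi.
have hv := cvgD (FF:=Fy) (@cvg_cst _ e0 _ _ Fy) (cvgZ (FF:=Fy) hc (@cvg_id _ (nbhs y))).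
have hden := cvgB (FF:=Fy) (@cvg_cst _ (1 : R) _ _ Fy) (cvgM (FF:=Fy) (cvgM (FF:=Fy) h0 h0) hqi).
have hden0 : 1 - y ord0 ord0 * y ord0 ord0 * (-1)^-1 != 0.
  rewrite invrN invr1 mulrN1 opprK; apply: lt0r_neq0.
  have : 0 <= y ord0 ord0 * y ord0 ord0 by rewrite -expr2 sqr_ge0.
  move=> ?; lra.
have harg := cvgM (FF:=Fy) (cvgB (FF:=Fy) (@cvg_cst _ (-1 : R) _ _ Fy) hq) (cvgV (FF:=Fy) hden0 hden).
have hm := continuous_cvg Fy (@sqrt_continuous R _) harg.

rewrite subrr mul0r sqrtr0 in hm.
have hpp := cvgD (FF:=Fy) (@cvg_id _ (nbhs y)) (cvgZ (FF:=Fy) hm hv).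
have hpm := cvgB (FF:=Fy) (@cvg_id _ (nbhs y)) (cvgZ (FF:=Fy) hm hv).
rewrite scale0r addr0 in hpp; rewrite scale0r subr0 in hpm.
have hs := continuous_cvg Fy (@sqrt_continuous R _) (cvgN (FF:=Fy) hq).
rewrite opprK sqrtr1 in hs.
have hw := cvgZ (FF:=Fy) (cvgV (FF:=Fy) (oner_neq0 R) hs) (@cvg_id _ (nbhs y)).
rewrite invr1 scale1r in hw.
split.
- exact: hq.
- exact: hpp.
- exact: hpm.
- exact: hw.
Qed.

Lemma main_sec (O : set V) :
  spacelike_compl O = interior (Cset O) `&` @dS R d.
Proof.
apply/seteqP; split => y.
- move=> [dSy [U [oU Uy sub]]].
  split => //.
  have Unb : nbhs y U by apply: open_nbhs_nbhs.
  have [hq hpp hpm hw] := conts y dSy.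
  rewrite /interior /=.
  near=> z.
  have hq0 : qf z < 0.
    near: z; apply: (@cvgr_lt R _ _ (nbhs_filter y) _ _ hq); rewrite oppr_lt0 ltr01 //.
  have U1 : U (ppf z) by near: z; exact: (hpp _ Unb).
  have U2 : U (pmf z) by near: z; exact: (hpm _ Unb).
  have U3 : U (wf z) by near: z; exact: (hw _ Unb).
  move=> x Ox.
  have [hle|hlt] := lerP (qf z) (-1).
    have [d1 d2] := L3 z hle.
    have [_ c1] := sub _ (conj U1 d1).
    have [_ c2] := sub _ (conj U2 d2).
    rewrite (L4 x z); have := c1 x Ox; have := c2 x Ox; lra.
  have [d3 [hs hs0]] := L5 z hq0.
  have [_ c3] := sub _ (conj U3 d3).
  rewrite (L6 x z hq0).
  have hs1 : sf z <= 1.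
    have : sf z ^+ 2 < 1 by rewrite -/(qf z) in hs; lra.
    move=> h; nra.
  have := c3 x Ox; nra.
- move=> [iy dSy]; split => //.
  exists (interior (Cset O)); split => //.
    exact: open_interior.
  move=> z [iz dSz]; split => //.
  exact: (@interior_subset _ (Cset O) z iz).
Unshelve. all: by end_near.
Qed.
End S.

Theorem mainTheorem12 (R : realType) (d : nat) (hd : (1 <= d)%N)
  (O : set 'rV[R]_(d.+1)) (hO : rel_open (@dS R d) O) :
  spacelike_compl O = interior (Cset O) `&` @dS R d.
Proof. exact: main_sec. Qed.
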